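(* Let $T\ge 1$ and, for $t=1,\dots,T$, let $X_t\in\mathbb{R}^{n_t\times p}$ be random design matrices, and let $y_t=X_t\beta+\epsilon_t$, where $\beta\in\mathbb{R}^p$ is deterministic and the noise vectors $\epsilon_t\in\mathbb{R}^{n_t}$ have entries (across all $t$) that are i.i.d. with mean $0$ and variance $\sigma^2$, independent of $X=(X_1^\top,\dots,X_T^\top)^\top$. Let $\lambda_1,\dots,\lambda_T>0$, $\hat\Sigma_t=\frac{1}{n_t}X_t^\top X_t$, $A_t=\lambda_t(\hat\Sigma_t+\lambda_t I_p)^{-1}$, and let $\hat\beta_T$ be the continual ridge estimator (defined in the context). Then for any positive semidefinite $\Sigma_0\in\mathbb{R}^{p\times p}$, $$B_X(\hat\beta_T;\beta,\Sigma_0)=\beta^\top A_1A_2\cdots A_T\Sigma_0A_T\cdots A_2A_1\beta,$$ $$V_X(\hat\beta_T;\beta,\Sigma_0)=\sigma^2\sum_{t=1}^T\frac{1}{\lambda_t n_t}\mathrm{Tr}\big[A_TA_{T-1}\cdots A_{t+1}(A_t-A_t^2)A_{t+1}\cdots A_{T-1}A_T\Sigma_0\big],$$ with the convention that an empty matrix product equals $I_p$.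
   Context: Continual ridge estimator: $\hat\beta_0=0$ and for $t=1,\dots,T$, $\hat\beta_t=\arg\min_{b\in\mathbb{R}^p}\{\frac{1}{n_t}\|X_tb-y_t\|^2+\lambda_t\|b-\hat\beta_{t-1}\|^2\}$; equivalently $\hat\beta_t=(\hat\Sigma_t+\lambda_tI_p)^{-1}\frac{1}{n_t}X_t^\top y_t+A_t\hat\beta_{t-1}$. For an estimator $\hat\beta$ and a positive semidefinite matrix $\Sigma_0$, the bias and variance terms are $B_X(\hat\beta;\beta,\Sigma_0)=(\mathbb{E}(\hat\beta\mid X)-\beta)^\top\Sigma_0(\mathbb{E}(\hat\beta\mid X)-\beta)$ and $V_X(\hat\beta;\beta,\Sigma_0)=\mathrm{Tr}(\mathrm{Cov}(\hat\beta\mid X)\Sigma_0)$. *)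

(* Defs.v *)
From HB Require Import structures.
From mathcomp Require Import all_boot all_order all_algebra.
From mathcomp Require Import all_classical all_reals all_analysis.
Set Implicit Arguments. Unset Strict Implicit. Unset Printing Implicit Defensive.
Import Order.TTheory GRing.Theory Num.Theory.
Local Open Scope classical_set_scope.
Local Open Scope ring_scope.

Definition mutually_independent d (Om : measurableType d) (R : realType)
    (P : probability Om R) (I : finType) (e : I -> Om -> R) : Prop :=
  forall (S : {set I}) (B : I -> set R), (forall i, measurable (B i)) ->
    P (\bigcap_(i in [set i | i \in S]) (e i @^-1` B i)) =
    (\big[*%E/1%E]_(i in S) P (e i @^-1` B i))%E.

Definition identically_distributed d (Om : measurableType d) (R : realType)
    (P : probability Om R) (I : Type) (e : I -> Om -> R) : Prop :=
  forall i j (B : set R), measurable B -> P (e i @^-1` B) = P (e j @^-1` B).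

(* index set of all noise entries: pairs (t, i) with task t+1 in 1..T and
   i < n_{t+1} *)
Definition noise_index (T : nat) (n : nat -> nat) : finType :=
  {t : 'I_T & 'I_(n t.+1)}.

Definition noise_family d (Om : measurableType d) (R : realType)
    (T : nat) (n : nat -> nat) (eps : forall t : nat, 'I_(n t) -> Om -> R)
    : noise_index T n -> Om -> R :=
  fun k => eps (tag k).+1 (tagged k).

Definition psd (R : realType) (p : nat) (M : 'M[R]_p) : Prop :=
  M^T = M /\ forall x : 'cV[R]_p, 0 <= (x^T *m M *m x) 0 0.

Section Ridge.
Variables (R : realType) (p : nat) (n : nat -> nat)
  (X : forall t : nat, 'M[R]_(n t, p)) (lam : nat -> R).

Definition Sigma_hat (t : nat) : 'M[R]_p := (n t)%:R^-1 *: (X t)^T *m X t.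

Definition Amat (t : nat) : 'M[R]_p :=
  lam t *: invmx (Sigma_hat t + (lam t)%:M).

(* continual ridge estimator, closed form given in the paper:
   beta_0 = 0, beta_t = (\hat\Sigma_t + lam_t I)^{-1} (1/n_t) X_t^T y_t
                        + A_t beta_{t-1} *)
Fixpoint cridge (y : forall t : nat, 'cV[R]_(n t)) (k : nat) : 'cV[R]_p :=
  match k with
  | 0 => 0
  | k'.+1 => invmx (Sigma_hat k + (lam k)%:M) *m
               ((n k)%:R^-1 *: ((X k)^T *m y k))
             + Amat k *m cridge y k'
  end.
End Ridge.

(* The design X is fixed (we condition on it); the randomness is the noise,
   so E(. | X) is the expectation over the probability space of the noise. *)

Section BiasVar.
Context d (Om : measurableType d) (R : realType) (P : probability Om R).
Variable p : nat.

Definition mean_vec (bhat : Om -> 'cV[R]_p) : 'cV[R]_p :=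
  \col_i fine ('E_P[fun w => bhat w i ord0]).

Definition cov_mat (bhat : Om -> 'cV[R]_p) : 'M[R]_p :=
  \matrix_(i, j) fine (covariance P (fun w => bhat w i ord0)
                                    (fun w => bhat w j ord0)).

Definition bias_term (bhat : Om -> 'cV[R]_p) (beta : 'cV[R]_p)
    (Sigma0 : 'M[R]_p) : R :=
  ((mean_vec bhat - beta)^T *m Sigma0 *m (mean_vec bhat - beta)) 0 0.

Definition var_term (bhat : Om -> 'cV[R]_p) (Sigma0 : 'M[R]_p) : R :=
  \tr (cov_mat bhat *m Sigma0).
End BiasVar.

(* Main.v *)
Require Import Defs.
From HB Require Import structures.
From mathcomp Require Import all_boot all_order all_algebra.
From mathcomp Require Import all_classical all_reals all_analysis.
From mathcomp Require Import measurable_realfun.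
From mathcomp Require Import ring lra.
Set Implicit Arguments. Unset Strict Implicit. Unset Printing Implicit Defensive.
Import Order.TTheory GRing.Theory Num.Theory.
Local Open Scope classical_set_scope.
Local Open Scope ring_scope.


Section indep.
Context d (Om : measurableType d) (R : realType) (P : probability Om R).
Variables (U V : Om -> R) (mU : measurable_fun setT U) (mV : measurable_fun setT V).
Hypothesis indUV : forall A B, measurable A -> measurable B ->
  P (U @^-1` A `&` V @^-1` B) = (P (U @^-1` A) * P (V @^-1` B))%E.
Hypothesis U0 : forall w, 0 <= U w.
Hypothesis V0 : forall w, 0 <= V w.

Let Um : {mfun Om >-> R} := HB.pack U (isMeasurableFun.Build _ _ _ _ _ mU).
Let Vm : {mfun Om >-> R} := HB.pack V (isMeasurableFun.Build _ _ _ _ _ mV).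
Let mZ := measurable_fun_pair mU mV.
Let Zm : {mfun Om >-> (R * R)%type} := HB.pack (fun w => (U w, V w)) (isMeasurableFun.Build _ _ _ _ _ mZ).

Lemma indep_ge0_integralM :
  (\int[P]_w (U w * V w)%:E = \int[P]_w (U w)%:E * \int[P]_w (V w)%:E)%E.
Proof.
pose m1 := distribution P Um.
pose m2 := distribution P Vm.
pose m' := distribution P Zm.
have prodE : forall S, measurable S -> ((m1 \x m2) S = m' S)%E.
  apply: product_measure_unique => A B mA mB.
  by rewrite /m' /distribution /pushforward -indUV.
pose f (z : (R * R)%type) := (`|z.1| * `|z.2|)%:E.
have mf : measurable_fun [set: (R * R)%type] f.
  apply/measurable_EFinP; apply: measurable_funM.
    by apply: measurableT_comp; [exact: normr_measurable|exact: measurable_fst].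
  by apply: measurableT_comp; [exact: normr_measurable|exact: measurable_snd].
have f0 : forall z, (0 <= f z)%E by move=> z; rewrite lee_fin mulr_ge0.
transitivity (\int[m']_z f z)%E.
  rewrite ge0_integral_distribution //; apply: eq_integral => w _.
  by rewrite /f /= !ger0_norm.
rewrite (eq_measure_integral (m1 \x m2)%E); last by move=> A mA _; exact: (esym (prodE A mA)).
rewrite fubini_tonelli1 //.
rewrite /fubini_F.
transitivity (\int[m1]_x ((`|x|)%:E * \int[m2]_y (`|y|)%:E))%E.
  apply: eq_integral => x _.
  transitivity (\int[m2]_y ((`|x|)%:E * (`|y|)%:E))%E.
    by apply: eq_integral => y _; rewrite /f /= EFinM.
  rewrite ge0_integralZl //.
  all: try (by apply/measurable_EFinP; exact: normr_measurable).
  all: try (by move=> *; rewrite lee_fin).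
  all: try (by rewrite lee_fin).
rewrite ge0_integralZr //.
all: try (by apply/measurable_EFinP; exact: normr_measurable).
all: try (by move=> *; rewrite lee_fin).
all: try (by apply: integral_ge0 => y _; rewrite lee_fin).
rewrite !ge0_integral_distribution //.
all: try (by apply/measurable_EFinP; exact: normr_measurable).
all: try (by move=> *; rewrite lee_fin).
congr (_ * _)%E; apply: eq_integral => w _ /=; by rewrite ger0_norm.
Qed.
End indep.

Lemma pre_meas (R : realType) (g : R -> R) (A : set R) :
  measurable_fun setT g -> measurable A -> measurable (g @^-1` A).
Proof. by move=> mg mA; rewrite -(setTI (g @^-1` A)); exact: (mg measurableT _ mA). Qed.

Lemma max0_pos (R : realType) (x y : R) :
  Num.max (x * y) 0 = Num.max x 0 * Num.max y 0 + Num.max (- x) 0 * Num.max (- y) 0.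
Proof.
rewrite !maxr_absE !subr0 !addr0 normrM !normrN.
by field.
Qed.

Lemma max0_neg (R : realType) (x y : R) :
  Num.max (- (x * y)) 0 = Num.max x 0 * Num.max (- y) 0 + Num.max (- x) 0 * Num.max y 0.
Proof.
rewrite !maxr_absE !subr0 !addr0 normrN normrM !normrN.
by field.
Qed.

Section indep2.
Context d (Om : measurableType d) (R : realType) (P : probability Om R).
Variables (X Y : Om -> R) (mX : measurable_fun setT X) (mY : measurable_fun setT Y).
Hypothesis indXY : forall A B, measurable A -> measurable B ->
  P (X @^-1` A `&` Y @^-1` B) = (P (X @^-1` A) * P (Y @^-1` B))%E.
Hypothesis X1 : X \in Lfun P 1.
Hypothesis Y1 : Y \in Lfun P 1.

Let pos (x : R) := Num.max x 0.
Let neg (x : R) := Num.max (- x) 0.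
Let mpos : measurable_fun setT pos.
Proof.
have -> : pos = (id \max cst 0) by apply/funext => x.
by apply: measurable_maxr => //; exact: measurable_cst.
Qed.
Let mneg : measurable_fun setT neg.
Proof.
have -> : neg = ((\- id) \max cst 0) by apply/funext => x.
apply: measurable_maxr => //.
exact: measurable_funN.
Qed.
Let pos0 x : 0 <= pos x. Proof. by rewrite /pos le_max lexx orbT. Qed.
Let neg0 x : 0 <= neg x. Proof. by rewrite /neg le_max lexx orbT. Qed.

Let core (g h : R -> R) : measurable_fun setT g -> measurable_fun setT h ->
  (forall x, 0 <= g x) -> (forall x, 0 <= h x) ->
  (\int[P]_w (g (X w) * h (Y w))%:E =
   \int[P]_w (g (X w))%:E * \int[P]_w (h (Y w))%:E)%E.
Proof.
move=> mg mh g0 h0.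
apply: (@indep_ge0_integralM _ _ _ P (g \o X) (h \o Y)).
- exact: measurableT_comp.
- exact: measurableT_comp.
- by move=> A B mA mB; exact: (indXY (pre_meas mg mA) (pre_meas mh mB)).
- by move=> w; exact: g0.
- by move=> w; exact: h0.
Qed.

Let posE (f : Om -> R) :
  (\int[P]_w ((fun w => (f w)%:E)^\+ w) = \int[P]_w (pos (f w))%:E)%E.
Proof. by apply: eq_integral => w _; rewrite funeposE /pos EFin_max. Qed.
Let negE (f : Om -> R) :
  (\int[P]_w ((fun w => (f w)%:E)^\- w) = \int[P]_w (neg (f w))%:E)%E.
Proof. by apply: eq_integral => w _; rewrite funenegE /neg EFin_max. Qed.

Lemma indep_expectationM : ('E_P[X * Y] = 'E_P[X] * 'E_P[Y])%E.
Proof.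
rewrite unlock.
rewrite (integralE _ _ (fun w => ((X * Y)%R w)%:E)).
rewrite (integralE _ _ (fun w => (X w)%:E)) (integralE _ _ (fun w => (Y w)%:E)).
rewrite !posE !negE.
have iX : P.-integrable setT (EFin \o X) by apply/Lfun1_integrable.
have iY : P.-integrable setT (EFin \o Y) by apply/Lfun1_integrable.
have fXp := integrable_pos_fin_num measurableT iX. have fXn := integrable_neg_fin_num measurableT iX.
have fYp := integrable_pos_fin_num measurableT iY. have fYn := integrable_neg_fin_num measurableT iY.
rewrite /comp posE in fXp. rewrite /comp negE in fXn.
rewrite /comp posE in fYp. rewrite /comp negE in fYn.
have -> : (\int[P]_w (pos ((X * Y)%R w))%:E =
  \int[P]_w (pos (X w) * pos (Y w))%:E + \int[P]_w (neg (X w) * neg (Y w))%:E)%E.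
  rewrite -ge0_integralD //.
  - by apply: eq_integral => w _; rewrite /pos /neg -EFinD /= max0_pos.
  - by move=> w _; rewrite lee_fin mulr_ge0.
  - apply/measurable_EFinP; apply: measurable_funM; exact: measurableT_comp.
  - by move=> w _; rewrite lee_fin mulr_ge0.
  - apply/measurable_EFinP; apply: measurable_funM; exact: measurableT_comp.
have -> : (\int[P]_w (neg ((X * Y)%R w))%:E =
  \int[P]_w (pos (X w) * neg (Y w))%:E + \int[P]_w (neg (X w) * pos (Y w))%:E)%E.
  rewrite -ge0_integralD //.
  - by apply: eq_integral => w _; rewrite /pos /neg -EFinD /= max0_neg.
  - by move=> w _; rewrite lee_fin mulr_ge0.
  - apply/measurable_EFinP; apply: measurable_funM; exact: measurableT_comp.
  - by move=> w _; rewrite lee_fin mulr_ge0.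
  - apply/measurable_EFinP; apply: measurable_funM; exact: measurableT_comp.
rewrite !core //.
move: fXp fXn fYp fYn.
move: (\int[P]_w (pos (X w))%:E)%E (\int[P]_w (neg (X w))%:E)%E
      (\int[P]_w (pos (Y w))%:E)%E (\int[P]_w (neg (Y w))%:E)%E.
move=> [a| |] // [b| |] // [c| |] // [e| |] // _ _ _ _.
rewrite -!EFinM -!EFinD; congr EFin; ring.
Qed.
End indep2.



Section lincomb.
Context d (Om : measurableType d) (R : realType) (P : probability Om R).
Variables (K : finType) (e : K -> Om -> R) (s2 : R).
Hypothesis e2 : forall k, e k \in Lfun P 2%:E.
Hypothesis e0 : forall k, ('E_P[e k] = 0)%E.
Hypothesis ecov : forall k l, covariance P (e k) (e l) = (if k == l then s2 else 0)%:E.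

Let Pfin : P setT \is a fin_num := fin_num_measure P _ measurableT.
Let e1 k : e k \in Lfun P 1 := Lfun_subset12 Pfin (e2 k).

Let sc2 (c : R) k : (c \o* e k) \in Lfun P 2%:E.
Proof. by apply: Lfun_scale => //; rewrite ler1n. Qed.
Let sc1 (c : R) k : (c \o* e k) \in Lfun P 1 := Lfun_subset12 Pfin (sc2 c k).

Lemma L2D (f g : Om -> R) : f \in Lfun P 2%:E -> g \in Lfun P 2%:E -> (f \+ g) \in Lfun P 2%:E.
Proof.
move=> hf hg; rewrite rpredD //.
all: try (by move=> ?).
all: try (by rewrite lee_fin ler1n).
Qed.

Definition lc (a : K -> R) (s : seq K) := fun w => \sum_(k <- s) a k * e k w.

Lemma lc_cons a x s : lc a (x :: s) = (a x \o* e x) \+ lc a s.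
Proof. by apply/funext => w; rewrite /lc big_cons /= mulrC. Qed.

Lemma lc_nil a : lc a [::] = cst 0.
Proof. by apply/funext => w; rewrite /lc big_nil. Qed.

Lemma lc_L2 a s : lc a s \in Lfun P 2%:E.
Proof.
elim: s => [|x s IH]; first by rewrite lc_nil Lfun_cst.
by rewrite lc_cons rpredD // ?sc2 // lee_fin ler1n.
Qed.

Let lc_L1 a s : lc a s \in Lfun P 1 := Lfun_subset12 Pfin (lc_L2 a s).

Lemma lc_E a s : ('E_P[lc a s] = 0)%E.
Proof.
elim: s => [|x s IH]; first by rewrite lc_nil expectation_cst.
rewrite lc_cons expectationD //.
by rewrite expectationZl // e0 IH mule0 adde0.
Qed.

Lemma cov_lc_l a s g : g \in Lfun P 2%:E ->
  covariance P (lc a s) g = (\sum_(k <- s) a k * fine (covariance P (e k) g))%:E.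
Proof.
move=> g2; have g1 := Lfun_subset12 Pfin g2.
elim: s => [|x s IH]; first by rewrite lc_nil covariance_cst_l big_nil.
rewrite lc_cons covarianceDl ?lc_L2 //.
rewrite covarianceZl //; last exact: Lfun2_mul_Lfun1.
rewrite IH big_cons EFinD EFinM fineK //.
by apply: covariance_fin_num => //; exact: Lfun2_mul_Lfun1.
Qed.

Lemma cov_lc (a b : K -> R) (c c' : R) :
  covariance P (fun w => c + lc a (index_enum K) w) (fun w => c' + lc b (index_enum K) w)
  = (\sum_k a k * (b k * s2))%:E.
Proof.
have -> : (fun w => c + lc a (index_enum K) w) = cst c \+ lc a (index_enum K) by [].
have -> : (fun w => c' + lc b (index_enum K) w) = cst c' \+ lc b (index_enum K) by [].
have Lc : forall r : R, cst r \in Lfun P 2%:E by move=> r; exact: Lfun_cst.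
have L2b : (cst c' \+ lc b (index_enum K)) \in Lfun P 2%:E.
  by rewrite L2D ?lc_L2.
rewrite covarianceDl ?lc_L2 //.
rewrite covariance_cst_l add0e.
rewrite covarianceDr ?lc_L2 //.
rewrite covariance_cst_r add0e.
rewrite cov_lc_l ?lc_L2 //; congr EFin; apply: eq_bigr => k _.
rewrite covarianceC cov_lc_l //= (bigD1 k) //= ecov eqxx /=.
rewrite big1 ?addr0 //.
by move=> l /negbTE lk; rewrite ecov lk mulr0.
Qed.

Lemma lc_E' (a : K -> R) (c : R) :
  ('E_P[fun w => (c + lc a (index_enum K) w)%R] = c%:E)%E.
Proof.
have -> : (fun w => c + lc a (index_enum K) w) = cst c \+ lc a (index_enum K) by [].
by rewrite expectationD ?Lfun_cst // expectation_cst lc_E adde0.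
Qed.

End lincomb.



Lemma mi_pair d (Om : measurableType d) (R : realType) (P : probability Om R)
  (I : finType) (e : I -> Om -> R) : mutually_independent P e ->
  forall k l, k != l -> forall A B, measurable A -> measurable B ->
  P (e k @^-1` A `&` e l @^-1` B) = (P (e k @^-1` A) * P (e l @^-1` B))%E.
Proof.
move=> mi k l kl A B mA mB.
have := mi [set k; l]%SET (fun i => if i == k then A else B).
have lk : (l == k) = false by rewrite eq_sym (negbTE kl).
rewrite big_setU1 /=; last by rewrite inE.
rewrite big_set1 eqxx lk.
move=> <-; last by move=> i; case: ifP.
congr (P _); apply/seteqP; split => w /=.
- move=> [h1 h2] i /=; rewrite !inE => /orP[] /eqP ->; rewrite ?eqxx ?lk //.
- move=> h; split.
  + by have := h k; rewrite /= !inE eqxx /=; apply.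
  + by have := h l; rewrite /= !inE eqxx lk orbT /=; apply.
Qed.



Lemma zmod_aux (V : zmodType) (b a w c s : V) :
  b - a + w + (a - c + s) = b - c + (s + w).
Proof.
rewrite -!addrA; congr (_ + _).
by rewrite [w + _]addrCA addKr addrCA [w + s]addrC.
Qed.

Section LA.
Variables (R : realType) (p : nat) (n : nat -> nat)
  (X : forall t : nat, 'M[R]_(n t, p)) (lam : nat -> R).
Local Notation A := (Amat X lam).
Local Notation S := (Sigma_hat X).

Definition Gm t := invmx (S t + (lam t)%:M).
Definition Wm t : 'M[R]_(p, n t) := Gm t *m ((n t)%:R^-1 *: (X t)^T).
Definition Pr t k := \prod_(s <- rev (iota t.+1 (k - t))) A s.

Lemma S_sym t : (S t)^T = S t.
Proof.
rewrite /Sigma_hat trmx_mul !linearZ /= trmxK.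
by rewrite scalemxAl.
Qed.

Lemma G_sym t : (Gm t)^T = Gm t.
Proof. by rewrite /Gm trmx_inv linearD /= S_sym tr_scalar_mx. Qed.

Lemma A_sym t : (A t)^T = A t.
Proof. by rewrite /Amat linearZ /= -/(Gm t) G_sym. Qed.

Lemma sq_ge0 m (u : 'rV[R]_m) : 0 <= (u *m u^T) 0 0.
Proof. by rewrite mxE; apply: sumr_ge0 => j _; rewrite mxE -expr2 sqr_ge0. Qed.

Lemma sq_gt0 m (u : 'rV[R]_m) : u != 0 -> 0 < (u *m u^T) 0 0.
Proof.
move=> u0; rewrite lt_def sq_ge0 andbT; apply: contra u0 => /eqP H.
apply/eqP/rowP => j; rewrite !mxE.
have Hn : forall i, true -> 0 <= u 0 i * u^T i 0 by move=> i _; rewrite mxE -expr2 sqr_ge0.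
move: H; rewrite mxE => /(psumr_eq0P Hn) H.
by have := H j isT; rewrite mxE -expr2 => /eqP; rewrite sqrf_eq0 => /eqP.
Qed.

Lemma unit_t t : (0 < n t)%N -> 0 < lam t -> S t + (lam t)%:M \in unitmx.
Proof.
move=> n0 l0; rewrite unitmxE unitfE; apply/negP => /det0P [v v0 vM].
have H : (v *m (S t + (lam t)%:M) *m v^T) 0 0 = 0 by rewrite vM mul0mx mxE.
move: H; rewrite mulmxDr mulmxDl mxE.
rewrite (_ : v *m (lam t)%:M *m v^T = lam t *: (v *m v^T)); last first.
  by rewrite mul_mx_scalar scalemxAl.
rewrite (_ : v *m S t *m v^T = (n t)%:R^-1 *: ((v *m (X t)^T) *m (v *m (X t)^T)^T)); last first.
  by rewrite /Sigma_hat trmx_mul trmxK -!scalemxAl -scalemxAr !mulmxA -scalemxAl.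
rewrite [X in X + _ = _]mxE [X in _ + X = _]mxE => H.
have h1 : 0 <= (n t)%:R^-1 * ((v *m (X t)^T) *m (v *m (X t)^T)^T) 0 0.
  by rewrite mulr_ge0 ?invr_ge0 ?ler0n ?sq_ge0.
have h2 : 0 < lam t * (v *m v^T) 0 0 by rewrite mulr_gt0 ?sq_gt0.
lra.
Qed.

Lemma GS t : S t + (lam t)%:M \in unitmx -> Gm t *m S t = 1%:M - A t.
Proof.
move=> U; have := mulVmx U; rewrite -/(Gm t) mulmxDr => H.
by rewrite -H /Amat -/(Gm t) scalar_mxC mul_scalar_mx addrK.
Qed.

Lemma GA t : lam t != 0 -> Gm t = (lam t)^-1 *: A t.
Proof. by move=> l0; rewrite /Amat -/(Gm t) scalerA mulVf // scale1r. Qed.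

Lemma WW t : S t + (lam t)%:M \in unitmx -> lam t != 0 ->
  Wm t *m (Wm t)^T = (lam t * (n t)%:R)^-1 *: (A t - A t *m A t).
Proof.
move=> U l0.
have -> : Wm t = (n t)%:R^-1 *: (Gm t *m (X t)^T) by rewrite /Wm -scalemxAr.
rewrite linearZ /= trmx_mul G_sym trmxK -scalemxAl -scalemxAr scalerA.
have -> : ((n t)%:R^-1 * (n t)%:R^-1) *: (Gm t *m (X t)^T *m (X t *m Gm t))
   = (n t)%:R^-1 *: (Gm t *m S t *m Gm t).
  by rewrite /Sigma_hat -!scalemxAl -scalemxAr -scalemxAl scalerA !mulmxA.
rewrite GS // mulmxBl mul1mx (GA l0) -scalemxAr -scalerBr scalerA.
by rewrite invfM mulrC.
Qed.

Lemma Pr_nil t : Pr t t = 1.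
Proof. by rewrite /Pr subnn big_nil. Qed.

Lemma Pr_rec t k : (t <= k)%N -> Pr t k.+1 = A k.+1 *m Pr t k.
Proof.
move=> tk; rewrite /Pr subSn // -[(k - t).+1]addn1 iotaD cats1 rev_rcons big_cons.
by rewrite addSn subnKC.
Qed.

Lemma tr_prod (l : seq nat) : (\prod_(s <- l) A s)^T = \prod_(s <- rev l) A s.
Proof.
elim: l => [|x l IH]; first by rewrite !big_nil trmx1.
rewrite rev_cons big_rcons big_cons /=.
by rewrite -[(A x * _)^T]/((A x *m _)^T) trmx_mul IH A_sym.
Qed.

Lemma Pr_tr t k : (Pr t k)^T = \prod_(s <- iota t.+1 (k - t)) A s.
Proof. by rewrite /Pr tr_prod revK. Qed.

Lemma cridge_rep (beta : 'cV[R]_p) (z : forall t, 'cV[R]_(n t)) k :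
  (forall t, (1 <= t <= k)%N -> S t + (lam t)%:M \in unitmx) ->
  cridge X lam (fun t => X t *m beta + z t) k =
  beta - Pr 0 k *m beta + \sum_(t < k) Pr t.+1 k *m (Wm t.+1 *m z t.+1).
Proof.
elim: k => [|k IH] U.
  by rewrite /= big_ord0 addr0 Pr_nil mul1mx subrr.
rewrite /= IH; last by move=> t /andP[t1 tk]; apply: U; rewrite t1 /= ltnW // ltnS.
rewrite big_ord_recr /= Pr_nil mul1mx.
rewrite mulmxDr linearZ /= mulmxDr scalerDr mulmxDr.
have U1 : S k.+1 + (lam k.+1)%:M \in unitmx by apply: U; rewrite /= leqnn.
rewrite (_ : (n k.+1)%:R^-1 *: (invmx (S k.+1 + (lam k.+1)%:M) *m ((X k.+1)^T *m (X k.+1 *m beta)))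
   = (1%:M - A k.+1) *m beta); last first.
  rewrite -(GS U1) /Gm /Sigma_hat !mulmxA -scalemxAl -scalemxAr -scalemxAl.
  by rewrite scalemxAl.
rewrite (_ : (n k.+1)%:R^-1 *: (invmx (S k.+1 + (lam k.+1)%:M) *m ((X k.+1)^T *m z k.+1))
   = Wm k.+1 *m z k.+1); last first.
  by rewrite /Wm /Gm !mulmxA -scalemxAr -scalemxAl.
rewrite mulmxBr mulmx_sumr Pr_rec // mulmxA.
rewrite (eq_bigr (fun t : 'I_k => Pr t.+1 k.+1 *m (Wm t.+1 *m z t.+1))); last first.
  by move=> t _; rewrite Pr_rec // mulmxA.
rewrite mulmxBl mul1mx -mulmxA.
exact: zmod_aux.
Qed.
End LA.


Unset Implicit Arguments.
Set Strict Implicit.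

Theorem lemma1 (R : realType) (d : measure_display) (Om : measurableType d)
    (P : probability Om R)
    (T p : nat) (n : nat -> nat) (X : forall t : nat, 'M[R]_(n t, p))
    (beta : 'cV[R]_p) (sigma : R) (lam : nat -> R)
    (eps : forall t : nat, 'I_(n t) -> Om -> R) (Sigma0 : 'M[R]_p) :
  (1 <= T)%N ->
  (forall t, (1 <= t <= T)%N -> (0 < n t)%N) ->
  (forall t, (1 <= t <= T)%N -> 0 < lam t) ->
  (forall k, measurable_fun setT (noise_family (T := T) eps k)) ->
  mutually_independent P (noise_family (T := T) eps) ->
  identically_distributed P (noise_family (T := T) eps) ->
  (forall k, noise_family (T := T) eps k \in Lfun P 2%:E) ->
  (forall k, ('E_P[noise_family (T := T) eps k])%E = 0%E) ->
  (forall k, 'V_P[noise_family (T := T) eps k] = (sigma ^+ 2)%:E) ->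
  psd Sigma0 ->
  let y := fun (w : Om) (t : nat) => X t *m beta + \col_i eps t i w in
  let bhat := fun w => cridge X lam (y w) T in
  let A := Amat X lam in
  bias_term P bhat beta Sigma0 =
    (beta^T *m (\prod_(1 <= t < T.+1) A t) *m Sigma0
            *m (\prod_(t <- rev (iota 1 T)) A t) *m beta) 0 0
  /\
  var_term P bhat Sigma0 =
    sigma ^+ 2 * \sum_(1 <= t < T.+1) (lam t * (n t)%:R)^-1 *
      \tr ((\prod_(s <- rev (iota t.+1 (T - t))) A s) *m (A t - A t *m A t)
           *m (\prod_(s <- iota t.+1 (T - t)) A s) *m Sigma0).
Proof.
move=> T1 hn hl mE mi _ L2 E0 V2 _ y bhat A.
pose K := noise_index T n.
pose e : K -> Om -> R := noise_family (T := T) eps.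
have U : forall t, (1 <= t <= T)%N -> Sigma_hat X t + (lam t)%:M \in unitmx.
  by move=> t ht; apply: unit_t; [exact: hn | exact: hl].
pose c := beta - Pr X lam 0 T *m beta.
pose M (t : 'I_T) : 'M[R]_(p, n t.+1) := Pr X lam t.+1 T *m Wm X lam t.+1.
have rep : forall w, bhat w = c + \sum_(t < T) M t *m \col_i eps t.+1 i w.
  move=> w; rewrite /bhat /y cridge_rep //; congr (_ + _).
  by apply: eq_bigr => t _; rewrite mulmxA.
have sig : forall F : forall t : 'I_T, 'I_(n t.+1) -> R,
    \sum_(t : 'I_T) \sum_(j : 'I_(n t.+1)) F t j = \sum_(q : K) F (tag q) (tagged q).
  by move=> F; exact: (@sig_big_dep _ _ _ 'I_T (fun t => 'I_(n t.+1)) xpredT (fun _ => xpredT) F).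
pose a (i : 'I_p) (q : K) := M (tag q) i (tagged q).
have entry : forall i, (fun w => bhat w i ord0) = (fun w => c i ord0 + lc e (a i) (index_enum K) w).
  move=> i; apply/funext => w; rewrite rep mxE summxE; congr (_ + _).
  rewrite /lc -(sig (fun t j => M t i j * eps t.+1 j w)); apply: eq_bigr => t _; rewrite mxE; apply: eq_bigr => j _.
  by rewrite !mxE.
have e2 : forall k, e k \in Lfun P 2%:E := L2.
have e0 : forall k, ('E_P[e k] = 0)%E := E0.
have Pfin : P setT \is a fin_num := fin_num_measure P _ measurableT.
have e1 : forall k, e k \in Lfun P 1 := fun k => Lfun_subset12 Pfin (e2 k).
have ecov : forall k l, covariance P (e k) (e l) = (if k == l then sigma ^+ 2 else 0)%:E.
  move=> k l; case: eqVneq => [<-|kl]; first exact: V2 k.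
  rewrite covarianceE ?e1 //; last exact: Lfun2_mul_Lfun1.
  rewrite (indep_expectationM (mE k) (mE l) (mi_pair mi kl) (e1 k) (e1 l)).
  by rewrite !e0 mule0 subee.
have mean : mean_vec P bhat = c.
  by apply/colP => i; rewrite mxE entry (lc_E' e2 e0).
split.
  rewrite /bias_term mean.
  have -> : c - beta = - (Pr X lam 0 T *m beta) by rewrite /c addrAC subrr add0r.
  rewrite !linearN /= !mulNmx opprK trmx_mul Pr_tr subn0.
  rewrite /Pr subn0 /index_iota subSS subn0 !mulmxA.
  by [].
have cov : cov_mat P bhat = sigma ^+ 2 *: \sum_(t < T) M t *m (M t)^T.
  apply/matrixP => i j; rewrite !mxE !entry (cov_lc e2 ecov) /=.
  rewrite summxE -(sig (fun t k => M t i k * (M t j k * sigma ^+ 2))) mulr_sumr.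
  apply: eq_bigr => t _; rewrite !mxE mulr_sumr; apply: eq_bigr => k _.
  rewrite !mxE; ring.
rewrite /var_term cov -scalemxAl mxtraceZ mulmx_suml raddf_sum.
congr (_ * _).
rewrite big_add1 /= big_mkord; apply: eq_bigr => t _.
have ht : (1 <= t.+1 <= T)%N by rewrite /= ltn_ord.
have l0 : lam t.+1 != 0 by rewrite gt_eqF // hl.
have key : M t *m (M t)^T = (lam t.+1 * (n t.+1)%:R)^-1 *:
    (Pr X lam t.+1 T *m (A t.+1 - A t.+1 *m A t.+1) *m (Pr X lam t.+1 T)^T).
  rewrite /M trmx_mul mulmxA -(mulmxA (Pr X lam t.+1 T)) (WW (U _ ht) l0).
  by rewrite -scalemxAr -scalemxAl.
rewrite key -!scalemxAl mxtraceZ Pr_tr.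
by [].
Qed.
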